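(* Let $(I,\preccurlyeq)$ be a directed set, let $S(\Lambda^{\preccurlyeq})$ be a direct spectrum over $(I,\preccurlyeq)$ with sets $\lambda_0(i)$, transports $\lambda^{\preccurlyeq}_{ij}$ and Bishop spaces $\mathcal F_i=(\lambda_0(i),F_i)$, and let $\mathcal F=(X,F)$ be a Bishop space. Let $S(\Lambda^{\preccurlyeq})\to\mathcal F$ be the contravariant direct spectrum over $(I,\preccurlyeq)$ with sets $\mathrm{Mor}(\mathcal F_i,\mathcal F)$, transports $(\lambda^{\preccurlyeq}_{ij})^+:\mathrm{Mor}(\mathcal F_j,\mathcal F)\to\mathrm{Mor}(\mathcal F_i,\mathcal F)$, $\phi\mapsto\phi\circ\lambda^{\preccurlyeq}_{ij}$ (for $i\preccurlyeq j$), and Bishop spaces $\mathcal F_i\to\mathcal F$. Then $\underset{\leftarrow}{\mathrm{Lim}}\,(\mathcal F_i\to\mathcal F)\simeq(\underset{\to}{\mathrm{Lim}}\,\mathcal F_i)\to\mathcal F$.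
   Context: Work in Bishop-style constructive mathematics. A directed set: a set with a reflexive transitive relation respecting equality, any two elements having a common upper bound. A direct family over $(I,\preccurlyeq)$: sets $\lambda_0(i)$ and functions $\lambda^{\preccurlyeq}_{ij}:\lambda_0(i)\to\lambda_0(j)$ for $i\preccurlyeq j$ with $\lambda^{\preccurlyeq}_{ii}=\mathrm{id}$ and $\lambda^{\preccurlyeq}_{ik}=\lambda^{\preccurlyeq}_{jk}\circ\lambda^{\preccurlyeq}_{ij}$. A contravariant direct family: sets $\mu_0(i)$ and functions $\mu^{\succcurlyeq}_{ji}:\mu_0(j)\to\mu_0(i)$ for $i\preccurlyeq j$ with $\mu^{\succcurlyeq}_{ii}=\mathrm{id}$, $\mu^{\succcurlyeq}_{ki}=\mu^{\succcurlyeq}_{ji}\circ\mu^{\succcurlyeq}_{kj}$. Bishop spaces: a Bishop topology on $X$ is a set $F$ of functions $X\to\mathbb R$ containing constants, closed under addition, composition with functions $\mathbb R\to\mathbb R$ uniformly continuous on every $[-n,n]$, and uniform limits; $\bigvee F_0$ = least Bishop topology containing $F_0$; Bishop morphism $(X,F)\to(Y,G)$: a function $h$ with $g\circ h\in F$ for all $g\in G$; Bishop isomorphism: bijective morphism with morphism inverse; $\simeq$: Bishop isomorphic. Exponential: $\mathcal F\to\mathcal G=(\mathrm{Mor}(\mathcal F,\mathcal G),\bigvee\{\phi_{x,g}:x\in X,g\in G\})$, $\phi_{x,g}(h)=g(h(x))$. A (contravariant) direct spectrum: a (contravariant) direct family with Bishop topologies on each set making all transports Bishop morphisms. Direct limit: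 $\sum^{\preccurlyeq}\lambda_0(i)$ = pairs $(i,x)$ with $(i,x)=(j,y)$ iff there is $k\succcurlyeq i,j$ with $\lambda^{\preccurlyeq}_{ik}(x)=\lambda^{\preccurlyeq}_{jk}(y)$; $\prod^{\succcurlyeq}F_i$ = dependent assignments $\Theta$ with $\Theta_i\in F_i$ and $\Theta_i=\Theta_j\circ\lambda^{\preccurlyeq}_{ij}$ for $i\preccurlyeq j$; $\underset{\to}{\mathrm{Lim}}\,\lambda_0(i)$ = classes $\mathrm{eql}_0(i,x)$ under that equality; $\mathrm{eql}_0f_\Theta(\mathrm{eql}_0(i,x))=\Theta_i(x)$; $\underset{\to}{\mathrm{Lim}}\,\mathcal F_i=(\underset{\to}{\mathrm{Lim}}\,\lambda_0(i),\bigvee\{\mathrm{eql}_0f_\Theta:\Theta\in\prod^{\succcurlyeq}F_i\})$. Inverse limit of a contravariant spectrum with sets $\mu_0(i)$, transports $\mu^{\succcurlyeq}_{ji}$, topologies $G_i$: $\prod^{\succcurlyeq}\mu_0(i)$ = dependent assignments $\Phi$ with $\Phi_i\in\mu_0(i)$, $\Phi_i=\mu^{\succcurlyeq}_{ji}(\Phi_j)$ for $i\preccurlyeq j$ (pointwise equality); $\pi_i(\Phi)=\Phi_i$; $\underset{\leftarrow}{\mathrm{Lim}}\,\mathcal G_i=(\prod^{\succcurlyeq}\mu_0(i),\bigvee\{g\circ\pi_i:i\in I,g\in G_i\})$. *)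

(* Defs.v *)
(* Bishop sets are modelled as a carrier type with an explicit equality
   relation (setoid-style); quotients (the direct limit) are given by
   changing the equality relation, as in Bishop set theory. *)
From Stdlib Require Import Reals.
Open Scope R_scope.

Record BSet := { bcar :> Type; beq : bcar -> bcar -> Prop }.
Arguments beq {b} _ _.

Definition is_equiv (X : BSet) : Prop :=
  (forall x : X, beq x x) /\
  (forall x y : X, beq x y -> beq y x) /\
  (forall x y z : X, beq x y -> beq y z -> beq x z).

Definition is_fun (X Y : BSet) (f : X -> Y) : Prop :=
  forall x y : X, beq x y -> beq (f x) (f y).

Definition is_rfun (X : BSet) (f : X -> R) : Prop :=
  forall x y : X, beq x y -> f x = f y.

Definition Top (X : BSet) := (X -> R) -> Prop.

Definition Bic (phi : R -> R) : Prop :=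
  forall (n : nat) (eps : R), 0 < eps ->
    exists delta, 0 < delta /\
      forall x y, Rabs x <= INR n -> Rabs y <= INR n ->
        Rabs (x - y) < delta -> Rabs (phi x - phi y) < eps.

Definition is_bishop_top (X : BSet) (F : Top X) : Prop :=
  (forall f, F f -> is_rfun X f) /\
  (forall c : R, F (fun _ => c)) /\
  (forall f g, F f -> F g -> F (fun x => f x + g x)) /\
  (forall f phi, F f -> Bic phi -> F (fun x => phi (f x))) /\
  (forall f, is_rfun X f ->
     (forall eps, 0 < eps -> exists g, F g /\ forall x, Rabs (g x - f x) <= eps) ->
     F f).

Inductive bigvee (X : BSet) (F0 : Top X) : Top X :=
| bv_base f : is_rfun X f -> F0 f -> bigvee X F0 f
| bv_const (c : R) : bigvee X F0 (fun _ => c)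
| bv_add f g : bigvee X F0 f -> bigvee X F0 g -> bigvee X F0 (fun x => f x + g x)
| bv_comp f phi : bigvee X F0 f -> Bic phi -> bigvee X F0 (fun x => phi (f x))
| bv_lim f : is_rfun X f ->
    (forall eps, 0 < eps -> exists g, bigvee X F0 g /\ forall x, Rabs (g x - f x) <= eps) ->
    bigvee X F0 f.

Record BSpace := { bs_set :> BSet; bs_top : Top bs_set }.

Definition is_mor (A B : BSpace) (h : A -> B) : Prop :=
  is_fun A B h /\ forall g, bs_top B g -> bs_top A (fun x => g (h x)).

Lemma is_mor_comp (A B C : BSpace) (h : A -> B) (k : B -> C) :
  is_mor A B h -> is_mor B C k -> is_mor A C (fun x => k (h x)).
Proof.
  intros [hf ht] [kf kt]; split.
  - intros x y e; apply kf, hf, e.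
  - intros g Hg; apply (ht (fun y => g (k y))), kt, Hg.
Qed.

Definition MorSet (A B : BSpace) : BSet :=
  {| bcar := { h : A -> B | is_mor A B h };
     beq := fun h k => forall x, beq (proj1_sig h x) (proj1_sig k x) |}.

Definition expo (A B : BSpace) : BSpace :=
  {| bs_set := MorSet A B;
     bs_top := bigvee (MorSet A B)
       (fun phi => exists (x : A) (g : B -> R), bs_top B g /\
                     phi = (fun h : MorSet A B => g (proj1_sig h x))) |}.

Definition bishop_iso (A B : BSpace) : Prop :=
  exists (h : A -> B) (k : B -> A),
    is_mor A B h /\ is_mor B A k /\
    (forall x, beq (k (h x)) x) /\ (forall y, beq (h (k y)) y).

Record DirSet := { dI :> Type; deq : dI -> dI -> Prop; dle : dI -> dI -> Prop }.

Definition is_directed (D : DirSet) : Prop :=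
  (forall i, deq D i i) /\ (forall i j, deq D i j -> deq D j i) /\
  (forall i j k, deq D i j -> deq D j k -> deq D i k) /\
  (forall i, dle D i i) /\
  (forall i j k, dle D i j -> dle D j k -> dle D i k) /\
  (forall i i' j j', deq D i i' -> deq D j j' -> dle D i j -> dle D i' j') /\
  (forall i j, exists k, dle D i k /\ dle D j k).

Record DirSpec (D : DirSet) := {
  sp0 : D -> BSet;
  sptop : forall i, Top (sp0 i);
  splam : forall i j, dle D i j -> sp0 i -> sp0 j;
  splam_mor : forall i j (p : dle D i j),
      is_mor {| bs_set := sp0 i; bs_top := sptop i |}
             {| bs_set := sp0 j; bs_top := sptop j |} (splam i j p) }.
Arguments sp0 {D} _ _.
Arguments sptop {D} _ _.
Arguments splam {D} _ _ _ _ _.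

Definition spspace {D} (S : DirSpec D) (i : D) : BSpace :=
  {| bs_set := sp0 S i; bs_top := sptop S i |}.

Definition is_direct_spectrum {D} (S : DirSpec D) : Prop :=
  (forall i, is_equiv (sp0 S i)) /\
  (forall i, is_bishop_top (sp0 S i) (sptop S i)) /\
  (forall i (p : dle D i i) x, beq (splam S i i p x) x) /\
  (forall i j k (p : dle D i j) (q : dle D j k) (r : dle D i k) x,
      beq (splam S i k r x) (splam S j k q (splam S i j p x))).

Definition dlim_set {D} (S : DirSpec D) : BSet :=
  {| bcar := { i : D & sp0 S i };
     beq := fun a b => exists k (p : dle D (projT1 a) k) (q : dle D (projT1 b) k),
              beq (splam S _ k p (projT2 a)) (splam S _ k q (projT2 b)) |}.

Definition in_dep_prod_top {D} (S : DirSpec D) (Theta : forall i, sp0 S i -> R) : Prop :=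
  (forall i, sptop S i (Theta i)) /\
  (forall i j (p : dle D i j) x, Theta i x = Theta j (splam S i j p x)).

Definition dlim {D} (S : DirSpec D) : BSpace :=
  {| bs_set := dlim_set S;
     bs_top := bigvee (dlim_set S)
       (fun f => exists Theta, in_dep_prod_top S Theta /\
                   f = (fun a : dlim_set S => Theta (projT1 a) (projT2 a))) |}.

Record CDirSpec (D : DirSet) := {
  cs0 : D -> BSet;
  cstop : forall i, Top (cs0 i);
  csmu : forall i j, dle D i j -> cs0 j -> cs0 i }.
Arguments cs0 {D} _ _.
Arguments cstop {D} _ _.
Arguments csmu {D} _ _ _ _ _.

Definition invlim_set {D} (C : CDirSpec D) : BSet :=
  {| bcar := { Phi : forall i, cs0 C i |
               forall i j (p : dle D i j), beq (Phi i) (csmu C i j p (Phi j)) };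
     beq := fun Phi Psi => forall i, beq (proj1_sig Phi i) (proj1_sig Psi i) |}.

Definition invlim {D} (C : CDirSpec D) : BSpace :=
  {| bs_set := invlim_set C;
     bs_top := bigvee (invlim_set C)
       (fun f => exists (i : D) (g : cs0 C i -> R), cstop C i g /\
                   f = (fun Phi : invlim_set C => g (proj1_sig Phi i))) |}.

Definition precomp {D} (S : DirSpec D) (F : BSpace) (i j : D) (p : dle D i j)
  (phi : MorSet (spspace S j) F) : MorSet (spspace S i) F :=
  exist _ (fun x => proj1_sig phi (splam S i j p x))
    (is_mor_comp (spspace S i) (spspace S j) F _ _
       (splam_mor D S i j p) (proj2_sig phi)).

Definition exp_spec {D} (S : DirSpec D) (F : BSpace) : CDirSpec D :=
  {| cs0 := fun i => MorSet (spspace S i) F;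
     cstop := fun i => bs_top (expo (spspace S i) F);
     csmu := precomp S F |}.

(* Main.v *)
Require Import Defs.
From Stdlib Require Import Reals.

Lemma bigvee_pull (A B : BSet) (F0 : Top B) (T : Top A) (m : A -> B) :
 (forall x y, beq x y -> beq (m x) (m y)) ->
 (forall c : R, T (fun _ => c)) ->
 (forall f g, T f -> T g -> T (fun x => f x + g x)) ->
 (forall f phi, T f -> Bic phi -> T (fun x => phi (f x))) ->
 (forall f, is_rfun A f -> (forall eps, 0 < eps -> exists g, T g /\ forall x, Rabs (g x - f x) <= eps) -> T f) ->
 (forall f, is_rfun B f -> F0 f -> T (fun x => f (m x))) ->
 forall f, bigvee B F0 f -> T (fun x => f (m x)).
Proof.
  intros hm hc ha hp hl hb.
  fix IH 2. intros f H. destruct H as [f rf b|c|f g Hf Hg|f phi Hf Hphi|f rf Happ].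
  - exact (hb f rf b).
  - exact (hc c).
  - exact (ha _ _ (IH f Hf) (IH g Hg)).
  - exact (hp _ phi (IH f Hf) Hphi).
  - apply hl.
    + intros x y e. apply rf, hm, e.
    + intros eps heps. destruct (Happ eps heps) as [g [Hg Hgf]].
      exists (fun x => g (m x)). split.
      * exact (IH g Hg).
      * intro x. exact (Hgf (m x)).
Qed.

Theorem theorem11p3 (D : DirSet) (S : DirSpec D) (F : BSpace) :
  is_directed D ->
  is_direct_spectrum S ->
  is_equiv F ->
  is_bishop_top F (bs_top F) ->
  bishop_iso (invlim (exp_spec S F)) (expo (dlim S) F).
Proof.
  intros HD HS HF HFt.
  destruct HD as [_ [_ [_ [Drefl [Dtrans [_ Ddir]]]]]].
  destruct HS as [Seq [Stop [Sid Scomp]]].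
  destruct HF as [Frefl [Fsym Ftrans]].
  destruct HFt as [Frf [Fc [Fadd [Fcomp Flim]]]].
  set (hfun := fun (Phi : invlim_set (exp_spec S F)) (a : dlim S) =>
                 proj1_sig (proj1_sig Phi (projT1 a)) (projT2 a) : bs_set F).
  assert (hmor : forall Phi, is_mor (dlim S) F (hfun Phi)).
  { intros Phi. split.
    - intros [i x] [j y] [k [p [q E]]]. simpl in *. unfold hfun; simpl.
      pose proof (proj2_sig Phi i k p x) as C1.
      pose proof (proj2_sig Phi j k q y) as C2.
      simpl in C1, C2.
      pose proof (proj1 (proj2_sig (proj1_sig Phi k)) _ _ E) as C3.
      eapply Ftrans; [exact C1|]. eapply Ftrans; [exact C3|]. apply Fsym; exact C2.
    - intros g Hg. apply bv_base.
      + intros [i x] [j y] [k [p [q E]]]. apply (Frf g Hg). unfold hfun; simpl in *.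
        pose proof (proj2_sig Phi i k p x) as C1.
        pose proof (proj2_sig Phi j k q y) as C2.
        simpl in C1, C2.
        pose proof (proj1 (proj2_sig (proj1_sig Phi k)) _ _ E) as C3.
        eapply Ftrans; [exact C1|]. eapply Ftrans; [exact C3|]. apply Fsym; exact C2.
      + exists (fun i x => g (proj1_sig (proj1_sig Phi i) x)). split; [split|reflexivity].
        * intros i. exact (proj2 (proj2_sig (proj1_sig Phi i)) g Hg).
        * intros i j p x. apply (Frf g Hg). exact (proj2_sig Phi i j p x). }
  assert (kmor : forall (h : MorSet (dlim S) F) i,
             is_mor (spspace S i) F (fun x => proj1_sig h (existT _ i x))).
  { intros h i. split.
    - intros x y E. apply (proj1 (proj2_sig h)). simpl.
      exists i, (Drefl i), (Drefl i).
      destruct (Seq i) as [_ [Ssym Strans]].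
      eapply Strans; [apply Sid|]. eapply Strans; [exact E|]. apply Ssym, Sid.
    - intros g Hg. pose proof (proj2 (proj2_sig h) g Hg) as H.
      destruct (Stop i) as [_ [Tc [Ta [Tp Tl]]]].
      refine (bigvee_pull (sp0 S i) (dlim_set S) _ (sptop S i)
                (fun x => existT _ i x) _ Tc Ta Tp Tl _ _ H).
      + intros x y E. exists i, (Drefl i), (Drefl i).
        destruct (Seq i) as [_ [Ssym Strans]].
        eapply Strans; [apply Sid|]. eapply Strans; [exact E|]. apply Ssym, Sid.
      + intros f rf [Theta [[HT _] ->]]. exact (HT i). }
  set (kfun := fun (h : MorSet (dlim S) F) i =>
         (exist _ (fun x => proj1_sig h (existT _ i x)) (kmor h i)
           : MorSet (spspace S i) F)).
  assert (kcoh : forall h i j (p : dle D i j),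
             beq (kfun h i) (precomp S F i j p (kfun h j))).
  { intros h i j p x. simpl. apply (proj1 (proj2_sig h)). simpl.
    exists j, p, (Drefl j). destruct (Seq j) as [_ [Ssym _]]. apply Ssym, Sid. }
  set (kk := fun h => (exist _ (kfun h) (kcoh h) : invlim_set (exp_spec S F))).
  set (hh := fun Phi => (exist _ (hfun Phi) (hmor Phi) : MorSet (dlim S) F)).
  exists hh, kk. split; [|split; [|split]].
  - split.
    + intros Phi Psi E [i x]. exact (E i x).
    + intros G HG.
      refine (bigvee_pull _ _ _ _ hh _ (bv_const _ _) (bv_add _ _) (bv_comp _ _) (bv_lim _ _) _ G HG).
      * intros Phi Psi E [i x]. exact (E i x).
      * intros f rf [[i x] [g [Hg ->]]]. apply bv_base.
        -- intros Phi Psi E. apply (Frf g Hg). exact (E i x).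
        -- exists i, (fun phi => g (proj1_sig phi x)). split; [|reflexivity].
           apply bv_base.
           ++ intros phi psi E. apply (Frf g Hg). exact (E x).
           ++ exists x, g. split; [exact Hg|reflexivity].
  - split.
    + intros h h' E i x. exact (E (existT _ i x)).
    + intros G HG.
      refine (bigvee_pull _ _ _ _ kk _ (bv_const _ _) (bv_add _ _) (bv_comp _ _) (bv_lim _ _) _ G HG).
      * intros h h' E i x. exact (E (existT _ i x)).
      * intros f rf [i [g' [Hg' ->]]].
        refine (bigvee_pull _ (MorSet (spspace S i) F) _ _ (fun h => kfun h i) _
                 (bv_const _ _) (bv_add _ _) (bv_comp _ _) (bv_lim _ _) _ g' Hg').
        -- intros h h' E x. exact (E (existT _ i x)).
        -- intros f2 rf2 [x [g [Hg ->]]]. apply bv_base.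
           ++ intros h h' E. apply (Frf g Hg). exact (E (existT _ i x)).
           ++ exists (existT _ i x), g. split; [exact Hg|reflexivity].
  - intros Phi i x. apply Frefl.
  - intros h [i x]. apply Frefl.
Qed.
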